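(* Let $\mathbb{T}$ be a time scale and $f:\mathbb{T}\to\mathbb{R}$, $f(t)=t$. Then for $\alpha\in]0,1]$ and $t\in\mathbb{T}_\kappa$, $$f^{\nabla^\alpha}(t)=\begin{cases}[t-\rho(t)]^{1-\alpha}&\text{if }\alpha\neq1,\\ 1&\text{if }\alpha=1.\end{cases}$$
   Context: A time scale $\mathbb{T}$ is a nonempty closed subset of $\mathbb{R}$. $\rho(t)=\sup\{s\in\mathbb{T}: s<t\}$ (with $\sup\emptyset=\inf\mathbb{T}$), $\sigma(t)=\inf\{s\in\mathbb{T}:s>t\}$ (with $\inf\emptyset=\sup\mathbb{T}$), $f^\rho=f\circ\rho$. $\mathbb{T}_\kappa=\mathbb{T}\setminus\{\inf\mathbb{T}\}$ if $\inf\mathbb{T}$ is finite with $\sigma(\inf\mathbb{T})>\inf\mathbb{T}$, otherwise $\mathbb{T}_\kappa=\mathbb{T}$. $0^{\gamma}=0$ for $\gamma>0$. Let $A=\,]0,1]\cap\{1/q: q\text{ odd positive integer}\}$; for $\alpha=1/q\in A$, $x^\alpha$ is the real $q$-th root. For $t\in\mathbb{T}_\kappa$, $f^{\nabla^\alpha}(t)$ is the real number (if it exists) such that for every $\varepsilon>0$ there is $\delta>0$ with $\big|[f(s)-f^\rho(t)]-f^{\nabla^\alpha}(t)[s-\rho(t)]^\alpha\big|\le\varepsilon|s-\rho(t)|^\alpha$ for all $s\in\,]t-\delta,t+\delta[\,\cap\mathbb{T}$ if $\alpha\in A$, resp. all $s\in[t,t+\delta[\,\cap\mathbb{T}$ if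 $\alpha\notin A$ (the nabla fractional derivative of order $\alpha$). *)

(* Defs.v *)
From HB Require Import structures.
From mathcomp Require Import all_boot all_order all_algebra.
From mathcomp Require Import all_classical all_reals all_analysis.
Set Implicit Arguments. Unset Strict Implicit. Unset Printing Implicit Defensive.
Import Order.TTheory GRing.Theory Num.Theory.
Import numFieldNormedType.Exports.
Local Open Scope classical_set_scope.
Local Open Scope ring_scope.

Section TimeScales.
Variable R : realType.

Definition time_scale (T : set R) : Prop := T !=set0 /\ closed T.

Definition rho (T : set R) (t : R) : R :=
  let S := [set s | T s /\ s < t] in
  if `[< S = set0 >] then inf T else sup S.

Definition sigma (T : set R) (t : R) : R :=
  let S := [set s | T s /\ t < s] in
  if `[< S = set0 >] then sup T else inf S.

Definition T_kappa (T : set R) : set R :=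
  if `[< has_lbound T /\ inf T < sigma T (inf T) >] then T `\ inf T else T.

Definition setA : set R :=
  [set a | 0 < a <= 1 /\ exists q : nat, (0 < q)%N /\ odd q /\ a = (q%:R)^-1].

(* x^gamma: for x >= 0 the usual power (0^gamma = 0 for gamma > 0);
   for x < 0 and gamma = 1/q in A, the real q-th root, i.e. -((-x)^gamma);
   for x < 0 and gamma not in A it is never used (set to 0). *)
Definition fpow (gamma x : R) : R :=
  if 0 <= x then powR x gamma
  else if `[< setA gamma >] then - powR (- x) gamma else 0.

Definition is_nabla_frac_deriv (T : set R) (f : R -> R) (alpha t L : R) : Prop :=
  forall eps : R, 0 < eps -> exists2 delta : R, 0 < delta &
    forall s : R, T s ->
      (if `[< setA alpha >] then `|s - t| < delta else t <= s < t + delta) ->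
      `| (f s - f (rho T t)) - L * fpow alpha (s - rho T t) |
        <= eps * fpow alpha `|s - rho T t|.

End TimeScales.

(* Main.v *)
Require Import Defs.
From HB Require Import structures.
From mathcomp Require Import all_boot all_order all_algebra.
From mathcomp Require Import all_classical all_reals all_analysis.
From mathcomp Require Import lra.
Import Order.TTheory GRing.Theory Num.Theory.
Local Open Scope classical_set_scope.
Local Open Scope ring_scope.

Lemma rho_facts (R : realType) (T : set R) (t : R) : T t ->
  rho T t <= t /\ (forall s, T s -> s < t -> s <= rho T t).
Proof.
move=> Tt; rewrite /rho; case: asboolP => [S0|Sn].
- have lb : lbound T t.
    move=> s Ts; rewrite leNgt; apply/negP => st.
    have : [set s | T s /\ s < t] s by [].
    by rewrite S0.
  have -> : inf T = t.
    apply/le_anti/andP; split.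
      by apply: ge_inf => //; exists t.
    by apply: lb_le_inf => //; exists t.
  split => // s Ts st.
  have : [set s | T s /\ s < t] s by [].
  by rewrite S0.
- have ne : [set s | T s /\ s < t] !=set0.
    by apply/set0P/eqP.
  have ub : ubound [set s | T s /\ s < t] t by move=> s [_ /ltW].
  split; first exact: ge_sup.
  move=> s Ts st; apply: ub_le_sup; first by exists t.
  by split.
Qed.

Lemma le_powR_self (R : realType) (x b : R) : 0 <= x <= 1 -> 0 < b <= 1 ->
  x <= x `^ b.
Proof.
move=> /andP[x0 x1] /andP[b0 b1].
have [->|xn0] := eqVneq x 0; first by rewrite powR0 ?gt_eqF.
by apply: ger1_powR => //; rewrite lt_neqAle eq_sym xn0 x0.
Qed.

Lemma powR_subadd (R : realType) (b c d : R) : 0 < b <= 1 -> 0 <= c -> 0 <= d ->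
  (c + d) `^ b <= c `^ b + d `^ b.
Proof.
move=> hb c0 d0.
have [u0|un0] := eqVneq (c + d) 0.
  by rewrite u0 powR0 ?gt_eqF ?addr_ge0 ?powR_ge0 //; case/andP: hb.
have upos : 0 < c + d by rewrite lt_neqAle eq_sym un0 addr_ge0.
set u := c + d.
have hc : c = u * (c / u) by rewrite mulrC divfK.
have hd : d = u * (d / u) by rewrite mulrC divfK.
have cu : 0 <= c / u <= 1.
  by rewrite divr_ge0 ?(ltW upos) //= ler_pdivrMr // mul1r /u lerDl.
have du : 0 <= d / u <= 1.
  by rewrite divr_ge0 ?(ltW upos) //= ler_pdivrMr // mul1r /u lerDr.
move: cu du => /andP[cu0 cu1] /andP[du0 du1].
rewrite [in X in _ <= X]hc [in X in _ <= X]hd (powRM _ (ltW upos) cu0) (powRM _ (ltW upos) du0).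
rewrite -mulrDr -[X in X <= _]mulr1 ler_wpM2l ?powR_ge0 //.
apply: (le_trans _ (lerD (le_powR_self _ _ _ (introT andP (conj cu0 cu1)) hb) (le_powR_self _ _ _ (introT andP (conj du0 du1)) hb))).
by rewrite -mulrDl divff.
Qed.

Lemma powR_split (R : realType) (a v : R) : 0 <= v ->
  v = v `^ a * v `^ (1 - a).
Proof.
move=> v0; rewrite -powRD; last by rewrite addrC subrK oner_eq0.
by rewrite addrC subrK powRr1.
Qed.

Lemma key (R : realType) (a c u d eps : R) : 0 < a -> a < 1 -> 0 <= c -> c <= u ->
  u - c <= d -> d `^ (1 - a) <= eps ->
  `| u - c `^ (1 - a) * fpow a u| <= eps * fpow a `|u|.
Proof.
move=> a0 a1 c0 cu ud hd.
have u0 : 0 <= u by apply: le_trans cu.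
have b0 : 0 < 1 - a by rewrite subr_gt0.
have b1 : 0 < 1 - a <= 1 by rewrite b0 /= gerBl ltW.
rewrite (ger0_norm u0) /fpow u0.
rewrite {1}(powR_split _ a _ u0) [c `^ _ * _]mulrC -mulrBr normrM ger0_norm ?powR_ge0 // mulrC.
rewrite ler_wpM2r ?powR_ge0 //.
have cuB : c `^ (1 - a) <= u `^ (1 - a).
  by apply: ge0_ler_powR => //; rewrite ?nnegrE ?ltW.
rewrite ger0_norm ?subr_ge0 // lerBlDl.
have -> : u = c + (u - c) by rewrite addrC subrK.
apply: (le_trans (powR_subadd _ _ _ _ b1 c0 _)); first by rewrite subr_ge0.
rewrite lerD2l; apply: le_trans hd.
apply: ge0_ler_powR => //; rewrite ?nnegrE ?subr_ge0 //; first exact: ltW.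
by apply: le_trans ud; rewrite subr_ge0.
Qed.

Theorem proposition3p6 (R : realType) (T : set R) (alpha t : R) :
  time_scale T -> 0 < alpha <= 1 -> T_kappa T t ->
  is_nabla_frac_deriv T (fun x : R => x) alpha t
    (if alpha != 1 then fpow (1 - alpha) (t - rho T t) else 1).
Proof.
move=> _ /andP[a0 a1] HK.
have Tt : T t.
  by move: HK; rewrite /T_kappa; case: asboolP => _ //; case.
have [rt hS] := rho_facts _ _ _ Tt.
move=> eps e0.
have [a1e|an1] := eqVneq alpha 1.
  exists 1 => // s Ts _.
  have fp : forall x : R, fpow 1 x = x.
    move=> x; rewrite /fpow; case: ifP => x0; first by rewrite powRr1.
    have hA : setA (1 : R).
      split; first by rewrite ltr01 lexx.
      by exists 1%N; rewrite invr1.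
    by rewrite asboolT // powRr1 ?opprK // oppr_ge0 ltW // ltNge x0.
  by rewrite a1e !fp mul1r subrr normr0 mulr_ge0 // ltW.
have alt : alpha < 1 by rewrite lt_neqAle an1 a1.
have b0 : 0 < 1 - alpha by rewrite subr_gt0.
set r := rho T t.
have hL : fpow (1 - alpha) (t - r) = (t - r) `^ (1 - alpha).
  by rewrite /fpow subr_ge0 rt.
rewrite /= hL.
set d0 := eps `^ ((1 - alpha)^-1).
have d0pos : 0 < d0 by apply: powR_gt0.
have hd0 : d0 `^ (1 - alpha) = eps.
  by rewrite -powRrM mulVf ?gt_eqF // powRr1 // ltW.
have [rlt|req] : r < t \/ r = t.
  by move: rt; rewrite le_eqVlt => /orP[/eqP|]; [right|left].
- exists (Num.min d0 (t - r)); first by rewrite lt_min d0pos subr_gt0.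
  move=> s Ts hs.
  have st : t <= s.
    rewrite leNgt; apply/negP => st.
    have sr : s <= r := hS s Ts st.
    have : `|s - t| < t - r.
      case: asboolP hs => _ /=.
        by move=> h; apply: lt_le_trans h _; rewrite ge_min lexx orbT.
      by move=> /andP[ts _]; rewrite ltNge ts in st.
    rewrite ltr0_norm ?subr_lt0 // => h; lra.
  have sd : s - t < d0.
    case: asboolP hs => _ /=.
      move=> h; apply: le_lt_trans (ler_norm _) _; apply: lt_le_trans h _.
      by rewrite ge_min lexx.
    move=> /andP[_ h]; rewrite ltrBlDl; apply: lt_le_trans h _.
    by rewrite lerD2l ge_min lexx.
  apply: (key _ _ _ _ d0) => //; first by rewrite subr_ge0.
  - by rewrite lerD2r.
  - by rewrite opprB addrA subrK ltW.
  - by rewrite hd0.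
- exists d0 => // s Ts hs.
  rewrite -/r req subrr powR0 ?gt_eqF // mul0r subr0.
  have sd : `|s - t| <= d0.
    case: asboolP hs => _ /=; first by move/ltW.
    move=> /andP[ts h]; rewrite ger0_norm ?subr_ge0 // lerBlDl ltW //.
  have := key _ alpha 0 `|s - t| d0 eps a0 alt (lexx 0) (normr_ge0 (s - t)) _ (ltac:(by rewrite hd0) : d0 `^ (1 - alpha) <= eps).
  rewrite powR0 ?gt_eqF // mul0r subr0 normr_id; apply.
  exact: sd.
Qed.
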